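(* Let $P$ be a finite set of points in the plane in general position with $|P|$ even, and let $A\subseteq P$ be the union of the vertex sets of some connected components of the underlying graph of $P$. If $a,b\in A$ and the line through $a$ and $b$ is a halving line of $P$, then the two open half-planes determined by this line contain equally many points of $A$.
   Context: Points are in general position if no three are collinear. For a finite set $P$ of $n$ points in general position with $n$ even, a halving line of $P$ is a line through two points of $P$ that has exactly $(n-2)/2$ points of $P$ strictly on each side. The underlying graph of $P$ has vertex set $P$, and two points are adjacent if and only if the line through them is a halving line of $P$. *)

(* Defs.v *)
From HB Require Import structures.
From mathcomp Require Import all_boot all_order all_algebra.
Set Implicit Arguments. Unset Strict Implicit. Unset Printing Implicit Defensive.
Import Order.TTheory GRing.Theory Num.Theory.
Local Open Scope ring_scope.

(* A planar point configuration: a finite index type T with an injective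
   map pt : T -> R * R; the point set P is the image of pt. *)

(* Orientation determinant: > 0 iff c lies strictly to the left of the
   directed line a -> b, < 0 iff strictly to the right, = 0 iff collinear. *)
Definition orient (R : numDomainType) (a b c : R * R) : R :=
  (b.1 - a.1) * (c.2 - a.2) - (b.2 - a.2) * (c.1 - a.1).

Definition general_position (R : numDomainType) (T : finType) (pt : T -> R * R) :=
  forall x y z : T, x != y -> y != z -> x != z -> orient (pt x) (pt y) (pt z) != 0.

Definition left_of (R : numDomainType) (T : finType) (pt : T -> R * R)
  (S : {set T}) (x y : T) : {set T} :=
  [set z in S | 0 < orient (pt x) (pt y) (pt z)].
Definition right_of (R : numDomainType) (T : finType) (pt : T -> R * R)
  (S : {set T}) (x y : T) : {set T} :=
  [set z in S | orient (pt x) (pt y) (pt z) < 0].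

Definition halving (R : numDomainType) (T : finType) (pt : T -> R * R) (x y : T) : bool :=
  (x != y) &&
  (#|left_of pt setT x y| == (#|T| - 2) %/ 2)%N &&
  (#|right_of pt setT x y| == (#|T| - 2) %/ 2)%N.

Definition halving_graph (R : numDomainType) (T : finType) (pt : T -> R * R) : rel T :=
  fun x y => halving pt x y.

(* Main.v *)
Require Import Defs.
From HB Require Import structures.
From mathcomp Require Import all_boot all_order all_algebra.
From mathcomp Require Import ring lra zify.
Import Order.TTheory GRing.Theory Num.Theory.
Local Open Scope ring_scope.
Set Implicit Arguments. Unset Strict Implicit. Unset Printing Implicit Defensive.


Definition above (R : realFieldType) (T : finType) (g : T -> R) (z : T) : {set T} :=
  [set y | g z < g y].
Definition Sm (R : realFieldType) (T : finType) (g : T -> R) (m : nat) : {set T} :=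
  [set z | (#|above g z| <= m)%N].
Definition hc (R : realFieldType) (T : finType) (g : T -> R) (m : nat) (A : {set T}) :=
  #|Sm g m :&: A|.

Lemma ex_minR (R : realFieldType) (U : finType) (P : pred U) (f : U -> R) p0 :
  P p0 -> exists2 p, P p & forall q, P q -> f p <= f q.
Proof.
move=> Pp0; case: (arg_minP f Pp0) => i Pi Hi; exists i => //.
Qed.

Lemma pair_card (R : realFieldType) (T : finType) (g gc : T -> R) z w :
  z != w -> g z < g w -> gc z = gc w ->
  (forall y, y != z -> y != w -> (g z < g y) = (gc z < gc y) /\ (g w < g y) = (gc w < gc y)) ->
  #|above g w| = #|above gc z| /\ #|above g z| = (#|above gc z|).+1.
Proof.
move=> nzw lzw ezw H.
have E1 : above g w = above gc z.
  apply/setP => y; rewrite !inE.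
  case: (eqVneq y z) => [->|nyz].
    by rewrite ltxx; apply/negbTE; rewrite -leNgt ltW.
  case: (eqVneq y w) => [->|nyw]; first by rewrite ltxx ezw ltxx.
  by have [_ ->] := H y nyz nyw; rewrite ezw.
have E2 : above g z = w |: above gc z.
  apply/setP => y; rewrite !inE.
  case: (eqVneq y w) => [->|nyw]; first by rewrite lzw.
  case: (eqVneq y z) => [->|nyz]; first by rewrite !ltxx.
  by have [-> _] := H y nyz nyw.
split; first by rewrite E1.
rewrite E2 cardsU1 inE ezw ltxx //.
Qed.


Lemma single_le (R : realFieldType) (T : finType) (A : {set T}) (m : nat) (g0 g1 gc : T -> R) :
  injective g0 -> injective g1 ->
  (forall x y, g0 x < g0 y -> g1 x < g1 y -> gc x < gc y) ->
  (forall x y, g0 x < g0 y -> g1 y < g1 x -> gc x = gc y) ->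
  (forall x y z, x != y -> y != z -> x != z -> gc x = gc y -> gc y = gc z -> False) ->
  (forall x y, x != y -> gc x = gc y -> #|above gc x| = m -> (x \in A) = (y \in A)) ->
  (hc g0 m A <= hc g1 m A)%N.
Proof.
move=> i0 i1 Hn Hs H3 H2.
pose swp z y := ((g0 z < g0 y) && (g1 y < g1 z)) || ((g0 y < g0 z) && (g1 z < g1 y)).
have swpC z y : swp z y = swp y z by rewrite /swp orbC.
have swpE z y : swp z y -> gc z = gc y /\ z != y.
  case/orP=> /andP[a b]; split.
  - exact: Hs.
  - by apply/eqP => e; move: a; rewrite e ltxx.
  - by apply/esym/Hs.
  - by apply/eqP => e; move: a; rewrite e ltxx.
have swpU z y y' : swp z y -> swp z y' -> y = y'.
  move=> s1 s2; apply/eqP; apply/negP => /negP ne.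
  have [e1 n1] := swpE _ _ s1; have [e2 n2] := swpE _ _ s2.
  by apply: (H3 y z y'); rewrite // 1?eq_sym //; rewrite -e1 e2.
have F1 z y : y != z -> ~~ swp z y ->
   (g0 z < g0 y) = (gc z < gc y) /\ (g1 z < g1 y) = (gc z < gc y).
  move=> nyz ns.
  have d0 : g0 z != g0 y by apply: contra nyz => /eqP /i0 ->.
  have d1 : g1 z != g1 y by apply: contra nyz => /eqP /i1 ->.
  move: ns; rewrite /swp.
  case: (ltgtP (g0 z) (g0 y)) d0 => // h0 _; case: (ltgtP (g1 z) (g1 y)) d1 => // h1 _ _.
  - by have := Hn _ _ h0 h1 => ->.
  - have := Hn _ _ h0 h1 => h; split; apply/esym/negbTE; rewrite -leNgt ltW //.
have NS z y y' : swp z y -> y' != z -> y' != y -> ~~ swp z y'.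
  by move=> s a b; apply/negP => s'; move/eqP: b; rewrite (swpU _ _ _ s s').
have C1 z : z \in Sm g0 m -> z \notin Sm g1 m -> exists w, [/\ swp z w, w \in Sm g1 m, w \notin Sm g0 m & (z \in A) = (w \in A)].
  move=> zS0 zS1.
  case: (pickP (swp z)) => [w sw|nsw]; last first.
    suff : above g0 z = above g1 z by move: zS0 zS1; rewrite !inE => + + E; rewrite E => ->.
    apply/setP => y; rewrite !inE; case: (eqVneq y z) => [->|nyz]; first by rewrite !ltxx.
    by have [-> ->] := F1 z y nyz (negbT (nsw y)).
  exists w; have [ezw nzw] := swpE _ _ sw.
  have Hy (g : T -> R) : (forall y, y != z -> ~~ swp z y -> (g z < g y) = (gc z < gc y)) ->
              (forall y, y != w -> ~~ swp w y -> (g w < g y) = (gc w < gc y)) ->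
      forall y, y != z -> y != w -> (g z < g y) = (gc z < gc y) /\ (g w < g y) = (gc w < gc y).
    move=> Hz Hw y a b; split; first by apply: Hz => //; apply: NS sw a b.
    by apply: Hw => //; apply: (NS w z); rewrite // swpC.
  have Hy0 := Hy g0 (fun y a b => (F1 z y a b).1) (fun y a b => (F1 w y a b).1).
  have Hy1 := Hy g1 (fun y a b => (F1 z y a b).2) (fun y a b => (F1 w y a b).2).
  have Aw : above gc w = above gc z by apply/setP => y; rewrite !inE ezw.
  have nwz : w != z by rewrite eq_sym.
  move: (sw); rewrite /swp => /orP[]/andP[a b].
  - have [c1 c2] := pair_card nzw a ezw Hy0.
    have [c3 c4] := pair_card (w:=z) (z:=w) (g:=g1) (gc:=gc) nwz
       b (esym ezw) (fun y p q => let: conj u v := Hy1 y q p in conj v u).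
    by move: zS0 zS1; rewrite !inE c2 c3 Aw => /ltnW ->.
  - have [c1 c2] := pair_card (z:=w) (w:=z) (g:=g0) (gc:=gc) nwz
       a (esym ezw) (fun y p q => let: conj u v := Hy0 y q p in conj v u).
    have [c3 c4] := pair_card nzw b ezw Hy1.
    move: zS0 zS1; rewrite !inE c1 c3 c4 c2 Aw => K1 K2.
    have Km : #|above gc z| = m by apply/eqP; rewrite eqn_leq K1 /= leqNgt.
    split => //; rewrite ?K1 // -?ltnNge ?ltnS ?K2 //.
    exact: H2 nzw ezw Km.
pose sig z := if z \in Sm g1 m then z else odflt z [pick y | swp z y].
have sigS z : z \in Sm g0 m :&: A -> sig z \in Sm g1 m :&: A /\
     (z \notin Sm g1 m -> sig z \notin Sm g0 m /\ swp z (sig z)).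
  rewrite inE => /andP[zS0 zA]; rewrite /sig.
  case: ifP => zS1; first by rewrite inE zS1 zA.
  have [w [sw wS1 wS0 eA]] := C1 z zS0 (negbT zS1).
  case: pickP => [y sy|/(_ w)]; last by rewrite sw.
  rewrite /= (swpU _ _ _ sy sw) inE wS1 -eA zA; split=> //.
have := @card_in_imset _ _ sig (mem (Sm g0 m :&: A)).
rewrite /hc => <-.
- apply: subset_leq_card; apply/subsetP => y /imsetP[z zD ->]; exact: (sigS z zD).1.
- move=> z1 z2 D1 D2 E.
  have [_ H1] := sigS z1 D1; have [_ H4] := sigS z2 D2.
  move: D1 D2; rewrite !inE => /andP[a1 _] /andP[a2 _].
  move: E H1 H4; rewrite /sig.
  case: ifP => s1; case: ifP => s2.
  + by [].
  + by move=> E _ /(_ isT) [] + _; rewrite -E inE a1.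
  + by move=> E /(_ isT) [] + _ _; rewrite E inE a2.
  + move=> E /(_ isT) [_ p1] /(_ isT) [_ p2]; rewrite E in p1.
    by apply: (swpU (odflt z2 [pick y | swp z2 y])); rewrite swpC.
Qed.


Lemma single_eq (R : realFieldType) (T : finType) (A : {set T}) (m : nat) (g0 g1 gc : T -> R) :
  injective g0 -> injective g1 ->
  (forall x y, g0 x < g0 y -> g1 x < g1 y -> gc x < gc y) ->
  (forall x y, g0 x < g0 y -> g1 y < g1 x -> gc x = gc y) ->
  (forall x y z, x != y -> y != z -> x != z -> gc x = gc y -> gc y = gc z -> False) ->
  (forall x y, x != y -> gc x = gc y -> #|above gc x| = m -> (x \in A) = (y \in A)) ->
  hc g0 m A = hc g1 m A.
Proof.
move=> i0 i1 Hn Hs H3 H2; apply/eqP; rewrite eqn_leq.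
rewrite (single_le i0 i1 Hn Hs H3 H2) /=.
apply: (single_le i1 i0 _ _ H3 H2).
- by move=> x y a b; exact: Hn b a.
- by move=> x y a b; rewrite (Hs y x b a).
Qed.

Definition Fam (R : realFieldType) (T : finType) (al be : T -> R) (t : R) (x : T) :=
  (1 - t) * al x + t * be x.

Lemma fam_convex (R : realFieldType) (T : finType) (al be : T -> R) t0 t t1 x y :
  t0 < t -> t < t1 -> Fam al be t0 x < Fam al be t0 y -> Fam al be t1 x < Fam al be t1 y ->
  Fam al be t x < Fam al be t y.
Proof.
rewrite /Fam => h1 h2 h3 h4.
set e0 := al y - al x; set e1 := be y - be x.
have E s : (1 - s) * al y + s * be y - ((1 - s) * al x + s * be x) = e0 + s * (e1 - e0).
  rewrite /e0 /e1; ring.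
rewrite -subr_gt0 E; rewrite -subr_gt0 E in h3; rewrite -subr_gt0 E in h4.
have K : (t1 - t0) * (e0 + t * (e1 - e0)) = (t1 - t) * (e0 + t0 * (e1 - e0)) + (t - t0) * (e0 + t1 * (e1 - e0)).
  ring.
have : 0 < (t1 - t0) * (e0 + t * (e1 - e0)).
  rewrite K; apply: addr_gt0; apply: mulr_gt0; rewrite // subr_gt0 //.
by rewrite pmulr_rgt0 // subr_gt0 (lt_trans h1 h2).
Qed.

Definition tau (R : realFieldType) (T : finType) (al be : T -> R) (x y : T) :=
  (al y - al x) / ((al y - al x) - (be y - be x)).

Lemma swap_tau (R : realFieldType) (T : finType) (al be : T -> R) t0 t1 x y :
  t0 < t1 -> Fam al be t0 x < Fam al be t0 y -> Fam al be t1 y < Fam al be t1 x ->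
  [/\ t0 < tau al be x y, tau al be x y < t1,
      forall t, (Fam al be t x < Fam al be t y) = (t < tau al be x y) &
      forall t, (Fam al be t y < Fam al be t x) = (tau al be x y < t)].
Proof.
rewrite /Fam /tau => h1 h3 h4.
set e0 := al y - al x; set e1 := be y - be x.
have E s : (1 - s) * al y + s * be y - ((1 - s) * al x + s * be x) = e0 - s * (e0 - e1).
  rewrite /e0 /e1; ring.
have dpos : 0 < e0 - e1.
  rewrite -subr_gt0 E in h3; rewrite -subr_lt0 E in h4.
  have K : (t1 - t0) * (e0 - e1) = (e0 - t0 * (e0 - e1)) - (e0 - t1 * (e0 - e1)) by ring.
  have : 0 < (t1 - t0) * (e0 - e1) by rewrite K subr_gt0; exact: lt_trans h4 h3.
  by rewrite pmulr_rgt0 // subr_gt0.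
have E2 s : e0 - s * (e0 - e1) = (e0 - e1) * (e0 / (e0 - e1) - s).
  by field; rewrite gt_eqF.
have L s : ((1 - s) * al x + s * be x < (1 - s) * al y + s * be y) = (s < e0 / (e0 - e1)).
  by rewrite -subr_gt0 E E2 pmulr_rgt0 // subr_gt0.
have G s : ((1 - s) * al y + s * be y < (1 - s) * al x + s * be x) = (e0 / (e0 - e1) < s).
  by rewrite -subr_lt0 E E2 pmulr_rlt0 // subr_lt0.
split => //; first by rewrite -L.
by rewrite -G.
Qed.


Definition Psw (R : realFieldType) (T : finType) (al be : T -> R) (t0 t1 : R) : {set T * T} :=
  [set p : T * T | (Fam al be t0 p.1 < Fam al be t0 p.2) && (Fam al be t1 p.2 < Fam al be t1 p.1)].

Lemma chain (R : realFieldType) (T : finType) (al be : T -> R) (A : {set T}) (m : nat) :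
  (forall t x y z, x != y -> y != z -> x != z -> Fam al be t x = Fam al be t y ->
      Fam al be t y = Fam al be t z -> False) ->
  (forall t x y, x != y -> Fam al be t x = Fam al be t y -> #|above (Fam al be t) x| = m ->
      (x \in A) = (y \in A)) ->
  forall N t0 t1, (#|Psw al be t0 t1| <= N)%N -> t0 < t1 -> injective (Fam al be t0) ->
    injective (Fam al be t1) -> hc (Fam al be t0) m A = hc (Fam al be t1) m A.
Proof.
move=> H3 H2.
have emp t0 t1 : Psw al be t0 t1 = set0 -> injective (Fam al be t0) ->
    injective (Fam al be t1) -> hc (Fam al be t0) m A = hc (Fam al be t1) m A.
  move=> P0 i0 i1; apply: (single_eq (gc := Fam al be t0)) => //.
  - move=> x y a b; have : (x, y) \in Psw al be t0 t1 by rewrite inE /= a b.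
    by rewrite P0 inE.
  - exact: H3.
  - exact: H2.
elim=> [|N IH] t0 t1 HN lt01 i0 i1.
  by apply: emp => //; apply/eqP; rewrite -cards_eq0 -leqn0.
case: (set_0Vmem (Psw al be t0 t1)) => [P0|[p0 Hp0]]; first exact: emp.
have [ps Hps Hmin] := ex_minR (P := fun p => p \in Psw al be t0 t1)
                              (fun p => tau al be p.1 p.2) Hp0.
set c := tau al be ps.1 ps.2 in Hmin.
have Hsw p : p \in Psw al be t0 t1 -> [/\ t0 < tau al be p.1 p.2, tau al be p.1 p.2 < t1,
      forall t, (Fam al be t p.1 < Fam al be t p.2) = (t < tau al be p.1 p.2) &
      forall t, (Fam al be t p.2 < Fam al be t p.1) = (tau al be p.1 p.2 < t)].
  by rewrite inE => /andP[a b]; apply: swap_tau.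
have [c0 c1 _ _] := Hsw ps Hps; rewrite -/c in c0 c1.
have neq (x y : T) : x != y -> forall t, injective (Fam al be t) -> Fam al be t x != Fam al be t y.
  by move=> nxy t it; apply: contra nxy => /eqP /it ->.
case: (pickP (fun p => (p \in Psw al be t0 t1) && (c < tau al be p.1 p.2))) => [p1 Hp1|none].
- have [p2 Hp2 Hmin2] := ex_minR (P := fun p => (p \in Psw al be t0 t1) && (c < tau al be p.1 p.2))
                              (fun p => tau al be p.1 p.2) Hp1.
  set c2 := tau al be p2.1 p2.2 in Hmin2 Hp2 *.
  move: (Hp2) => /andP[Hp2a Hp2b].
  have [d0 d1 d2 d3] := Hsw p2 Hp2a; rewrite -/c2 in d0 d1 d2 d3.
  set t' := (c + c2) / 2.
  have ct : c < t' by rewrite /t'; lra.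
  have tc : t' < c2 by rewrite /t'; lra.
  have t0t : t0 < t' by lra.
  have tt1 : t' < t1 by lra.
  have tauP p : p \in Psw al be t0 t1 -> (tau al be p.1 p.2 < t') || (t' < tau al be p.1 p.2).
    move=> Pp; case: (ltP c (tau al be p.1 p.2)) => h.
    + have := Hmin2 p; rewrite Pp h => /(_ isT) h2; apply/orP; right; lra.
    + apply/orP; left; lra.
  have sep x y : Fam al be t0 x < Fam al be t0 y -> Fam al be t' x != Fam al be t' y.
    move=> h.
    have nxy : x != y by apply: contraTneq h => ->; rewrite ltxx.
    case: (ltgtP (Fam al be t1 x) (Fam al be t1 y)) (neq _ _ nxy t1 i1) => // h1 _.
    + by rewrite lt_eqF // (fam_convex t0t tt1 h h1).
    + have Pp : (x, y) \in Psw al be t0 t1 by rewrite inE h h1.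
      have [_ _ e1 e2] := Hsw _ Pp.
      case/orP: (tauP _ Pp) => h2.
      * by rewrite gt_eqF // (e2 t').
      * by rewrite lt_eqF // (e1 t').
  have i' : injective (Fam al be t').
    move=> x y E; apply/eqP; apply/negP => /negP nxy.
    case: (ltgtP (Fam al be t0 x) (Fam al be t0 y)) (neq _ _ nxy t0 i0) => // h _.
    + by move: (sep _ _ h); rewrite E eqxx.
    + by move: (sep _ _ h); rewrite E eqxx.
  have sub1 : Psw al be t0 t' \subset Psw al be t0 t1.
    apply/subsetP => -[x y]; rewrite !inE /= => /andP[a b]; rewrite a /=.
    have nxy : x != y by apply: contraTneq a => ->; rewrite ltxx.
    case: (ltgtP (Fam al be t1 x) (Fam al be t1 y)) (neq _ _ nxy t1 i1) => // h _.
    by move: b; rewrite ltNge ltW // (fam_convex t0t tt1 a h).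
  have sub2 : Psw al be t' t1 \subset Psw al be t0 t1.
    apply/subsetP => -[x y]; rewrite !inE /= => /andP[a b]; rewrite b andbT.
    have nxy : x != y by apply: contraTneq a => ->; rewrite ltxx.
    case: (ltgtP (Fam al be t0 x) (Fam al be t0 y)) (neq _ _ nxy t0 i0) => // h _.
    by move: a; rewrite ltNge ltW // (fam_convex t0t tt1 h b).
  have pr1 : Psw al be t0 t' \proper Psw al be t0 t1.
    apply/properP; split => //; exists p2 => //.
    by rewrite inE negb_and (d3 t') (lt_gtF tc) orbT.
  have pr2 : Psw al be t' t1 \proper Psw al be t0 t1.
    have [_ _ e1 _] := Hsw _ Hps.
    apply/properP; split => //; exists ps => //.
    by rewrite inE negb_and (e1 t') (lt_gtF ct).
  have hN1 := proper_card pr1; have hN2 := proper_card pr2.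
  rewrite (IH t0 t') //; last by rewrite -ltnS (leq_trans hN1 HN).
  rewrite (IH t' t1) //; by rewrite -ltnS (leq_trans hN2 HN).
- have allc p : p \in Psw al be t0 t1 -> tau al be p.1 p.2 = c.
    move=> Pp; apply/eqP; rewrite eq_le Hmin // andbT leNgt.
    by have := none p; rewrite Pp /= => ->.
  apply: (single_eq (gc := Fam al be c)) => //.
  - by move=> x y a b; apply: (fam_convex c0 c1 a b).
  - move=> x y a b.
    have Pp : (x, y) \in Psw al be t0 t1 by rewrite inE a b.
    have [_ _ e1 e2] := Hsw _ Pp; move: (e1 c) (e2 c); rewrite /= (allc _ Pp) ltxx.
    by case: (ltgtP (Fam al be c x) (Fam al be c y)).
  - exact: H3.
  - exact: H2.
Qed.


Definition cr (R : realFieldType) (u v : R * R) : R := u.1 * v.2 - u.2 * v.1.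

Lemma pair_eqR (R : realFieldType) (p q : R * R) : p.1 = q.1 -> p.2 = q.2 -> p = q.
Proof. by case: p q => [? ?] [? ?] /= -> ->. Qed.

Lemma level3 (R : realFieldType) (T : finType) (pt : T -> R * R) (U : R * R) :
  general_position pt -> (U.1 != 0) || (U.2 != 0) ->
  forall x y z, x != y -> y != z -> x != z -> cr U (pt x) = cr U (pt y) ->
   cr U (pt y) = cr U (pt z) -> False.
Proof.
move=> gp Unz x y z nxy nyz nxz e1 e2.
have := gp x y z nxy nyz nxz.
set D := orient _ _ _.
have K1 : D * U.1 = ((pt y).1 - (pt x).1) * (cr U (pt z) - cr U (pt x))
                  - ((pt z).1 - (pt x).1) * (cr U (pt y) - cr U (pt x)).
  by rewrite /D /orient /cr; ring.
have K2 : D * U.2 = ((pt y).2 - (pt x).2) * (cr U (pt z) - cr U (pt x))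
                  - ((pt z).2 - (pt x).2) * (cr U (pt y) - cr U (pt x)).
  by rewrite /D /orient /cr; ring.
rewrite -e2 -e1 subrr !mulr0 subrr in K1 K2.
move=> nD; case/orP: Unz => h.
- by move/eqP: K1; rewrite mulf_eq0 (negbTE nD) (negbTE h).
- by move/eqP: K2; rewrite mulf_eq0 (negbTE nD) (negbTE h).
Qed.

Lemma eq_above (R : realFieldType) (T : finType) (g g' : T -> R) z :
  (forall x, g x = g' x) -> above g z = above g' z.
Proof. by move=> E; apply/setP => y; rewrite !inE !E. Qed.

Lemma halving_of (R : realFieldType) (T : finType) (pt : T -> R * R) (U : R * R) (m : nat) :
  injective pt -> general_position pt -> (U.1 != 0) || (U.2 != 0) ->
  #|T| = (m + m + 2)%N -> ((#|T| - 2) %/ 2)%N = m ->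
  forall x y, x != y -> cr U (pt x) = cr U (pt y) ->
  #|above (fun z => cr U (pt z)) x| = m -> halving pt x y.
Proof.
move=> pti gp Unz hn hm x y nxy exy Ka.
set f := fun z => cr U (pt z).
pose below := [set z | f z < f x].
have Kb : #|below| = m.
  have E : below = ~: (above f x :|: [set x; y]).
    apply/setP => z; rewrite !inE negb_or.
    case: (eqVneq z x) => [->|nzx]; first by rewrite ltxx.
    case: (eqVneq z y) => [->|nzy]; first by rewrite /f -exy ltxx.
    rewrite /= andbT; case: (ltgtP (f z) (f x)) => // ezx.
    by exfalso; apply: (level3 gp Unz (x:=z) (y:=x) (z:=y)); rewrite // eq_sym.
  have D : above f x :&: [set x; y] = set0.
    apply/setP => z; rewrite !inE.
    case: (eqVneq z x) => [->|_]; first by rewrite ltxx.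
    case: (eqVneq z y) => [->|_]; first by rewrite /f -exy ltxx.
    by rewrite andbF.
  have := cardsC (above f x :|: [set x; y]).
  rewrite -E hn cardsU.
  rewrite D.
  rewrite cards0 subn0 Ka cards2 nxy; lia.
have Hor i : (i == 1%N) || (i == 2%N) -> forall z,
   orient (pt x) (pt y) (pt z) * (if i == 1%N then U.1 else U.2) =
   (if i == 1%N then (pt y).1 - (pt x).1 else (pt y).2 - (pt x).2) * (f z - f x).
  move=> hi z.
  have e0 : f y - f x = 0 by rewrite /f exy subrr.
  case/orP: hi => /eqP ->; rewrite /=.
  - transitivity (((pt y).1 - (pt x).1) * (f z - f x) - ((pt z).1 - (pt x).1) * (f y - f x)).
      by rewrite /f /orient /cr; ring.
    by rewrite e0 mulr0 subr0.
  - transitivity (((pt y).2 - (pt x).2) * (f z - f x) - ((pt z).2 - (pt x).2) * (f y - f x)).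
      by rewrite /f /orient /cr; ring.
    by rewrite e0 mulr0 subr0.
have main (k dd : R) : k != 0 -> dd != 0 ->
    (forall z, orient (pt x) (pt y) (pt z) * k = dd * (f z - f x)) -> halving pt x y.
  move=> kn dn Hz.
  have Ho z : orient (pt x) (pt y) (pt z) = dd / k * (f z - f x).
    by apply: (mulIf kn); rewrite Hz; field.
  have ln : dd / k != 0 by rewrite mulf_neq0 // invr_eq0.
  rewrite /halving nxy hm /=.
  case: (ltgtP (dd / k) 0) ln => // hl _.
  - have -> : left_of pt setT x y = below.
      by apply/setP => z; rewrite !inE Ho nmulr_rgt0 // subr_lt0.
    have -> : right_of pt setT x y = above f x.
      by apply/setP => z; rewrite !inE Ho nmulr_rlt0 // subr_gt0.
    by rewrite Kb Ka !eqxx.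
  - have -> : left_of pt setT x y = above f x.
      by apply/setP => z; rewrite !inE Ho pmulr_rgt0 // subr_gt0.
    have -> : right_of pt setT x y = below.
      by apply/setP => z; rewrite !inE Ho pmulr_rlt0 // subr_lt0.
    by rewrite Kb Ka !eqxx.
have ed : f y - f x = U.1 * ((pt y).2 - (pt x).2) - U.2 * ((pt y).1 - (pt x).1).
  by rewrite /f /cr; ring.
have e0 : f y - f x = 0 by rewrite /f exy subrr.
have ptne : pt x != pt y by apply: contra nxy => /eqP /pti ->.
case/orP: (Unz) => h.
- apply: (main _ _ h _ (Hor 1%N isT)) => /=.
  apply/negP => /eqP d1'; have d1 : (pt y).1 - (pt x).1 = 0 :> R by exact: d1'.
  move: e0; rewrite ed d1 mulr0 subr0 => /eqP.
  rewrite mulf_eq0 (negbTE h) /= subr_eq0 => /eqP d2.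
  by move/eqP: ptne; apply; apply: pair_eqR; [apply/esym/eqP; rewrite -subr_eq0 d1 | rewrite d2].
- apply: (main _ _ h _ (Hor 2%N isT)) => /=.
  apply/negP => /eqP d2'; have d2 : (pt y).2 - (pt x).2 = 0 :> R by exact: d2'.
  move: e0; rewrite ed d2 mulr0 sub0r => /eqP.
  rewrite oppr_eq0 mulf_eq0 (negbTE h) /= subr_eq0 => /eqP d1.
  by move/eqP: ptne; apply; apply: pair_eqR; [rewrite d1 | apply/esym/eqP; rewrite -subr_eq0 d2].
Qed.


Lemma endpoint (R : realFieldType) (T : finType) (pt : T -> R * R) (a b : T) (g : T -> R)
   (m : nat) (A : {set T}) :
  general_position pt -> a != b -> a \in A -> b \in A -> #|left_of pt setT a b| = m ->
  injective g ->
  (forall y z, orient (pt a) (pt b) (pt y) < orient (pt a) (pt b) (pt z) -> g y < g z) ->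
  hc g m A = (#|left_of pt A a b| + 1)%N.
Proof.
move=> gp nab aA bA hL gi Hg.
set o := fun z => orient (pt a) (pt b) (pt z).
set L := left_of pt setT a b.
have oa : o a = 0 by rewrite /o /orient; ring.
have ob : o b = 0 by rewrite /o /orient; ring.
have online z : o z = 0 -> (z == a) || (z == b).
  move=> oz; case: (eqVneq z a) => //= za; case: (eqVneq z b) => //= zb.
  by move: (gp a b z nab); rewrite eq_sym zb eq_sym za => /(_ isT isT); rewrite -/(o z) oz eqxx.
have inL z : (z \in L) = (0 < o z) by rewrite !inE.
have pq p q : o p = 0 -> o q = 0 -> (forall y, o y = 0 -> (y == p) || (y == q)) ->
    g p < g q -> (#|above g q| <= m)%N /\ (m < #|above g p|)%N.
  move=> op oq onl gpq; split.
  - rewrite -hL; apply: subset_leq_card; apply/subsetP => y; rewrite !inE => h.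
    case: (ltgtP (o y) 0) => // hy.
    + have h' : g y < g q by apply: Hg; rewrite -/(o y) -/(o q) oq.
      by move: (lt_trans h h'); rewrite ltxx.
    + case/orP: (onl y hy) => /eqP ey; move: h; rewrite ey.
      * by move=> h; move: (lt_trans h gpq); rewrite ltxx.
      * by rewrite ltxx.
  - have sub : q |: L \subset above g p.
      apply/subsetP => y; rewrite !inE => /orP[/eqP ->|h] //.
      by apply: Hg; rewrite -/(o p) op.
    have qL : q \notin L by rewrite inL oq ltxx.
    by move: (subset_leq_card sub); rewrite cardsU1 qL hL.
set top := if g a < g b then b else a.
have otop : o top = 0 by rewrite /top; case: ifP.
have topA : top \in A by rewrite /top; case: ifP.
have ES : Sm g m = top |: L.
  apply/setP => z; rewrite !inE.
  case: (ltgtP (o z) 0) => hz.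
  - have -> : (z == top) = false by apply/negbTE; apply: contraTneq hz => ->; rewrite otop ltxx.
    rewrite /= ?orbF; apply/negbTE; rewrite -ltnNge.
    have sub : a |: (b |: L) \subset above g z.
      apply/subsetP => y; rewrite !inE => /orP[/eqP ->|/orP[/eqP ->|h]];
        apply: Hg; rewrite -/(o z) -/(o _) ?oa ?ob //; exact: lt_trans hz h.
    have := subset_leq_card sub; rewrite !cardsU1 in_setU1 (negbTE nab) !inL oa ob ltxx hL.
    by move=> h; apply: leq_trans h.
  - rewrite /= ?andbT ?orbT.
    have sub : above g z \subset L :\ z.
      apply/subsetP => y; rewrite !inE => h; apply/andP; split.
        by apply: contraTneq h => ->; rewrite ltxx.
      rewrite -/(o y); rewrite ltNge; apply/negP => hy.
      have := Hg y z (le_lt_trans hy hz); rewrite ltNge (ltW h) //.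
    have := subset_leq_card sub; have := cardsD1 z L; rewrite inL hz hL => ->.
    by move=> h; apply: leq_trans h _; apply: leq_pred.
  - rewrite /= ?andbF ?orbF.
    have nba : b != a by rewrite eq_sym.
    have onab y : o y = 0 -> (y == a) || (y == b) by apply: online.
    have onba y : o y = 0 -> (y == b) || (y == a) by move=> /online; rewrite orbC.
    rewrite /top; case: (ltgtP (g a) (g b)) => hg.
    + have [h1 h2] := pq a b oa ob onab hg.
      case/orP: (online z hz) => /eqP ->; first by rewrite (negbTE nab); apply/negbTE; rewrite -ltnNge.
      by rewrite eqxx h1.
    + have [h1 h2] := pq b a ob oa onba hg.
      case/orP: (online z hz) => /eqP ->; first by rewrite eqxx h1.
      by rewrite (negbTE nba); apply/negbTE; rewrite -ltnNge.
    + by move/gi: hg => /eqP; rewrite (negbTE nab).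
rewrite /hc ES setIUl.
have -> : [set top] :&: A = [set top] by apply/setIidPl; rewrite sub1set.
have -> : L :&: A = left_of pt A a b by apply/setP => y; rewrite !inE andbC.
rewrite cardsU1 addnC; congr (_ + _)%N.
by rewrite !inE -/(o top) otop ltxx andbF.
Qed.

Unset Implicit Arguments.

Lemma eq_hc (R : realFieldType) (T : finType) (g g' : T -> R) m A :
  (forall x, g x = g' x) -> hc g m A = hc g' m A.
Proof.
move=> E; rewrite /hc; congr (#|_|); congr (_ :&: _); apply/setP => z.
by rewrite !inE (eq_above _ E).
Qed.

Lemma left_swap (R : realFieldType) (T : finType) (pt : T -> R * R) S a b :
  left_of pt S b a = right_of pt S a b.
Proof.
apply/setP => z; rewrite !inE.
have -> : orient (pt b) (pt a) (pt z) = - orient (pt a) (pt b) (pt z) by rewrite /orient; ring.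
by rewrite oppr_gt0.
Qed.

Theorem mainTheorem2 (R : realFieldType) (T : finType) (pt : T -> R * R)
  (pt_inj : injective pt)
  (gp : general_position pt)
  (heven : ~~ odd #|T|)
  (A : {set T})
  (hA : forall x y : T, connect (halving_graph pt) x y -> x \in A -> y \in A)
  (a b : T) (ha : a \in A) (hb : b \in A)
  (hab : halving pt a b) :
  #|left_of pt A a b| = #|right_of pt A a b|.
Proof.
set m := ((#|T| - 2) %/ 2)%N.
move: (hab); rewrite /halving => /andP[/andP[nab /eqP hL] /eqP hR].
have hm : ((#|T| - 2) %/ 2)%N = m by [].
have hn : #|T| = (m + m + 2)%N.
  have h2 : (2 <= #|T|)%N by have := max_card [set a; b]; rewrite cards2 nab.
  have ev : ~~ odd (#|T| - 2) by rewrite oddB // (negbTE heven).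
  have := odd_double_half (#|T| - 2); rewrite (negbTE ev) add0n -muln2.
  rewrite /m divn2; lia.
set u0 := ((pt b).1 - (pt a).1, (pt b).2 - (pt a).2).
set w := (- u0.2, u0.1).
pose q x := cr u0 (pt x).
pose cw x := cr w (pt x).
have u0pos : 0 < u0.1 ^+ 2 + u0.2 ^+ 2.
  have ptab : pt a != pt b by apply: contra nab => /eqP /pt_inj ->.
  have : (u0.1 != 0) || (u0.2 != 0).
    apply/negPn/negP => /norP [/negPn/eqP h1 /negPn/eqP h2]; move/eqP: ptab; apply.
    by apply: pair_eqR; apply/esym/eqP; rewrite -subr_eq0; apply/eqP; [exact: h1 | exact: h2].
  case/orP => h.
  - by apply: ltr_wpDr; [exact: sqr_ge0 | rewrite exprn_even_gt0].
  - by apply: ltr_wpDl; [exact: sqr_ge0 | rewrite exprn_even_gt0].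
have [eps eps0 Heps] : exists2 eps : R, 0 < eps &
    forall y z, q y != q z -> eps * `|cw z - cw y| < `|q z - q y|.
  case: (pickP (fun p : T * T => q p.1 != q p.2)) => [p0 Hp0|none]; last first.
    by exists 1 => // y z nq; move: (none (y, z)); rewrite /= nq.
  pose f (p : T * T) := `|q p.2 - q p.1| / (`|cw p.2 - cw p.1| + 1).
  have den p : 0 < `|cw p.2 - cw p.1| + 1 by apply: ltr_wpDl.
  have fpos p : q p.1 != q p.2 -> 0 < f p.
    move=> h; apply: divr_gt0 => //; rewrite normr_gt0 subr_eq0 eq_sym //.
  have [pm Hpm Hmin] := ex_minR (P := fun p : T * T => q p.1 != q p.2) f Hp0.
  exists (f pm); first exact: fpos.
  move=> y z nq; have := Hmin (y, z) nq; rewrite /f /=.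
  set c1 := `|cw z - cw y|; set c0 := `|q z - q y|; set e := _ / _ => he.
  have c0p : 0 < c0 by rewrite normr_gt0 subr_eq0 eq_sym.
  have dp : 0 < c1 + 1 by rewrite /c1; apply: ltr_wpDl.
  have c1p : 0 <= c1 by rewrite /c1.
  have K : c0 - c0 / (c1 + 1) * c1 = c0 / (c1 + 1) by field; rewrite gt_eqF.
  have : 0 < c0 / (c1 + 1) by apply: divr_gt0.
  rewrite -K subr_gt0 => h2.
  apply: le_lt_trans h2; exact: ler_wpM2r.
pose gs (s : R) x := s * q x + eps * cw x.
have gsK s y z : gs s z - gs s y = s * (q z - q y) + eps * (cw z - cw y).
  by rewrite /gs; ring.
have gs_inj s : `|s| = 1 -> injective (gs s).
  move=> hs x y E; apply: pt_inj.
  have E0 : s * (q y - q x) + eps * (cw y - cw x) = 0 by rewrite -gsK E subrr.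
  case: (eqVneq (q x) (q y)) => hq.
  - have hcw : cw y - cw x = 0.
      move: E0; rewrite hq subrr mulr0 add0r => /eqP; rewrite mulf_eq0 gt_eqF //= => /eqP.
      done.
    have hq' : q y - q x = 0 by rewrite hq subrr.
    have K1 : ((pt y).1 - (pt x).1) * (u0.1 ^+ 2 + u0.2 ^+ 2) =
              - u0.1 * (cw y - cw x) - u0.2 * (q y - q x).
      by rewrite /cw /q /cr /w /=; ring.
    have K2 : ((pt y).2 - (pt x).2) * (u0.1 ^+ 2 + u0.2 ^+ 2) =
              u0.1 * (q y - q x) - u0.2 * (cw y - cw x).
      by rewrite /cw /q /cr /w /=; ring.
    rewrite hcw hq' !mulr0 subrr in K1 K2.
    move/eqP: K1; rewrite mulf_eq0 (gt_eqF u0pos) orbF subr_eq0 => /eqP e1.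
    move/eqP: K2; rewrite mulf_eq0 (gt_eqF u0pos) orbF subr_eq0 => /eqP e2.
    by apply: pair_eqR.
  - exfalso; have := Heps x y hq.
    have : `|s * (q y - q x)| = `|eps * (cw y - cw x)|.
      by rewrite -normrN; congr (`|_|); apply/eqP; rewrite -subr_eq0 -opprD E0 oppr0.
    rewrite !normrM hs mul1r (ger0_norm (ltW eps0)) => ->; by rewrite ltxx.
have gs_ord s : `|s| = 1 -> forall y z, 0 < s * (q z - q y) -> gs s y < gs s z.
  move=> hs y z h; rewrite -subr_gt0 gsK.
  have nq : q y != q z.
    by apply: contraTneq h => ->; rewrite subrr mulr0 ltxx.
  have h1 := Heps y z nq.
  have h2 : s * (q z - q y) = `|q z - q y| by rewrite -(gtr0_norm h) normrM hs mul1r.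
  have h3 : - (eps * `|cw z - cw y|) <= eps * (cw z - cw y).
    by rewrite -mulrN ler_wpM2l ?(ltW eps0) // lerNnormlW.
  lra.
set al := gs 1; set be := gs (-1).
pose Ut (t : R) := ((1 - 2 * t) * u0.1 + eps * w.1, (1 - 2 * t) * u0.2 + eps * w.2).
have famE t x : Fam al be t x = cr (Ut t) (pt x).
  by rewrite /Fam /al /be /gs /Ut /q /cw /cr /=; ring.
have Unz t : ((Ut t).1 != 0) || ((Ut t).2 != 0).
  apply/negPn/negP => /norP [/negPn/eqP h1 /negPn/eqP h2].
  have K : (Ut t).1 ^+ 2 + (Ut t).2 ^+ 2 = ((1 - 2 * t) ^+ 2 + eps ^+ 2) * (u0.1 ^+ 2 + u0.2 ^+ 2).
    by rewrite /Ut /w /=; ring.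
  rewrite h1 h2 expr0n /= addr0 in K.
  have : 0 < ((1 - 2 * t) ^+ 2 + eps ^+ 2) * (u0.1 ^+ 2 + u0.2 ^+ 2).
    apply: mulr_gt0 => //; apply: ltr_wpDl; [exact: sqr_ge0 | exact: exprn_gt0].
  by rewrite -K ltxx.
have H3 t x y z : x != y -> y != z -> x != z -> Fam al be t x = Fam al be t y ->
      Fam al be t y = Fam al be t z -> False.
  rewrite !famE. exact: (@level3 R T pt (Ut t) gp (Unz t) x y z).
have H2 t x y : x != y -> Fam al be t x = Fam al be t y -> #|above (Fam al be t) x| = m ->
      (x \in A) = (y \in A).
  move=> nxy; rewrite !famE => E K.
  rewrite (eq_above _ (famE t)) in K.
  have K' : #|above (fun z => cr (Ut t) (pt z)) y| = m.
    rewrite -K (_ : above (fun z => cr (Ut t) (pt z)) y = above (fun z => cr (Ut t) (pt z)) x) //.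
    by apply/setP => z; rewrite !inE E.
  have hxy := halving_of pt_inj gp (Unz t) hn hm nxy E K.
  have hyx := halving_of pt_inj gp (Unz t) hn hm (contra_neq esym nxy) (esym E) K'.
  apply/idP/idP => h.
  - exact: hA x y (connect1 (hxy : halving_graph pt x y)) h.
  - exact: hA y x (connect1 (hyx : halving_graph pt y x)) h.
have F0 x : Fam al be 0 x = al x by rewrite /Fam; ring.
have F1 x : Fam al be 1 x = be x by rewrite /Fam; ring.
have n1 : `|1 : R| = 1 by rewrite normr1.
have n2 : `|-1 : R| = 1 by rewrite normrN normr1.
have i0 : injective (Fam al be 0) by move=> x y; rewrite !F0; apply: gs_inj.
have i1 : injective (Fam al be 1) by move=> x y; rewrite !F1; apply: gs_inj.
have := chain H3 H2 (leqnn _) ltr01 i0 i1.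
rewrite (@eq_hc _ _ _ _ m A F0) (@eq_hc _ _ _ _ m A F1).
have oK y z : orient (pt a) (pt b) (pt z) - orient (pt a) (pt b) (pt y) = q z - q y.
  by rewrite /orient /q /cr /u0 /=; ring.
have oK' y z : orient (pt b) (pt a) (pt z) - orient (pt b) (pt a) (pt y) = - (q z - q y).
  by rewrite /orient /q /cr /u0 /=; ring.
rewrite (endpoint (g := al) gp nab ha hb hL (gs_inj _ n1)); last first.
  by move=> y z h; apply: gs_ord => //; rewrite mul1r -oK subr_gt0.
rewrite (endpoint (a := b) (b := a) (g := be) gp (contra_neq esym nab) hb ha); first last.
- by move=> y z h; apply: gs_ord => //; rewrite mulN1r -oK' subr_gt0.
- exact: gs_inj.
- by rewrite left_swap.
rewrite (@left_swap _ _ pt A a b) => /eqP; rewrite eqn_add2r => /eqP //.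
Qed.
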